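(* Let $\mathcal{A}=(A,B,s,t,\Delta)$ be a left multiplier bialgebroid and $B_0\subseteq B$ a two-sided ideal with $s(B_0)A=A=t(B_0)A$; let $s_0,t_0$ be the restrictions of $s,t$ to $B_0$. Then the natural map ${}_{B_0}A\otimes A^{B_0}\to{}_BA\otimes A^B$ is an isomorphism. Let $\Delta_0$ be the composition of $\Delta$ with the induced isomorphism $A\bar\times_BA\to A\bar\times_{B_0}A$. Then $\mathcal{A}_0=(A,B_0,s_0,t_0,\Delta_0)$ is a left multiplier bialgebroid, and every left counit for $\mathcal{A}$ takes values in $B_0$ and is a left counit for $\mathcal{A}_0$.
   Context: All algebras are associative complex algebras, not necessarily unital. For an algebra $A$ with $A_A$ non-degenerate, $L(A)$ denotes right $A$-module endomorphisms of $A$ (containing $A$ via left multiplication) and $M(A)=\{T\in L(A):aT\in A\ \forall a\}$. For an algebra $D$ with a homomorphism $s\colon D\to M(A)$ and anti-homomorphism $t\colon D\to M(A)$, ${}_DA\otimes A^D$ denotes the quotient of $A\otimes A$ by the span of $s(x)a\otimes b-a\otimes t(x)b$ ($x\in D$), and $A\bar\times_DA$ the algebra of linear endomorphisms $T$ of ${}_DA\otimes A^D$ such that for all $a,b\in A$ there are $T(a\otimes1),T(1\otimes b)\in{}_DA\otimes A^D$ with $T(a\otimes b)=T(a\otimes1)(1\otimes b)=T(1\otimes b)(a\otimes1)$. A left multiplier bialgebroid is a tuple $(A,B,s,t,\Delta)$: (i) $A,B$ algebras, $A_A$ non-degenerate and idempotent; (ii) $s\colon B\to M(A)$ homomorphism,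 $t\colon B\to M(A)$ anti-homomorphism with commuting images, $s,t$ injective, $s(B)A=A=t(B)A$; ${}_BA\otimes A^B$ is non-degenerate as a right module over $A\otimes1$ and over $1\otimes A$; (iii) $\Delta\colon A\to A\bar\times_BA$ is an algebra homomorphism; (iv) $\Delta(s(x)t(y)as(x')t(y'))=(t(y)\otimes s(x))\Delta(a)(t(y')\otimes s(x'))$; (v) if $\Delta(b)(1\otimes c)=\sum p_i\otimes q_i$ and $\Delta(b)(a\otimes1)=\sum u_j\otimes v_j$ then $\sum\Delta(p_i)(a\otimes1)\otimes q_i=\sum u_j\otimes\Delta(v_j)(1\otimes c)$ in $A^{\otimes3}$ modulo the span of $s(x)a\otimes b\otimes c-a\otimes t(x)b\otimes c$ and $a\otimes s(x)b\otimes c-a\otimes b\otimes t(x)c$. Canonical maps $T_\lambda(a\otimes b)=\Delta(b)(a\otimes1)$, $T_\rho(a\otimes b)=\Delta(a)(1\otimes b)$. A left counit is a linear $\varepsilon\colon A\to B$ with $\varepsilon(s(x)a)=x\varepsilon(a)$, $\varepsilon(t(y)a)=\varepsilon(a)y$, $\sum t(\varepsilon(c_i))d_i=ab$ whenever $T_\rho(a\otimes b)=\sum c_i\otimes d_i$, and $\sum s(\varepsilon(d_i))c_i=ba$ whenever $T_\lambda(a\otimes b)=\sum c_i\otimes d_i$. *)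

(* Defs.v *)
From mathcomp Require Import all_boot all_algebra.
From mathcomp Require Import boolp Rstruct.
From mathcomp.real_closed Require Import complex.
Set Implicit Arguments.
Unset Strict Implicit.
Unset Printing Implicit Defensive.
Import GRing.Theory.
Local Open Scope ring_scope.

Notation CC := (Rdefinitions.R)[i].

(* [:: (k1,x1); ...; (kn,xn)] stands for k1 x1 + ... + kn xn. *)
Definition fv (X : Type) := seq (CC * X).

Definition coef (X : Type) (v : fv X) (x : X) : CC :=
  \sum_(p <- v) (if `[< p.2 = x >] then p.1 else 0).

Definition inspan (X : Type) (Rel : fv X -> Prop) (v : fv X) : Prop :=
  exists rs : seq (CC * fv X), List.Forall (fun r => Rel r.2) rs /\
    forall x, coef v x = \sum_(r <- rs) r.1 * coef r.2 x.

Definition fscale (X : Type) (k : CC) (v : fv X) : fv X :=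
  [seq (k * p.1, p.2) | p <- v].

(* equality in the quotient of the free space by span Rel *)
Definition fequiv (X : Type) (Rel : fv X -> Prop) (v w : fv X) : Prop :=
  inspan Rel (v ++ fscale (-1) w).

Definition is_lin (V W : lmodType CC) (f : V -> W) : Prop :=
  (forall x y, f (x + y) = f x + f y) /\ (forall (k : CC) x, f (k *: x) = k *: f x).

Definition is_alg (V : lmodType CC) (m : V -> V -> V) : Prop :=
  (forall x y z, m x (m y z) = m (m x y) z) /\
  (forall x y z, m (x + y) z = m x z + m y z) /\
  (forall x y z, m x (y + z) = m x y + m x z) /\
  (forall (k : CC) x y, m (k *: x) y = k *: m x y) /\
  (forall (k : CC) x y, m x (k *: y) = k *: m x y).

Definition is_subalg (V : lmodType CC) (m : V -> V -> V) (P : V -> Prop) : Prop :=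
  P 0 /\ (forall x y, P x -> P y -> P (x + y)) /\
  (forall (k : CC) x, P x -> P (k *: x)) /\ (forall x y, P x -> P y -> P (m x y)).

Definition is_ideal (V : lmodType CC) (m : V -> V -> V) (P : V -> Prop) : Prop :=
  P 0 /\ (forall x y, P x -> P y -> P (x + y)) /\
  (forall (k : CC) x, P x -> P (k *: x)) /\
  (forall x y, P y -> P (m x y) /\ P (m y x)).

Definition nondeg_r (V : lmodType CC) (m : V -> V -> V) : Prop :=
  forall a, (forall b, m a b = 0) -> a = 0.

Definition idempotent (V : lmodType CC) (m : V -> V -> V) : Prop :=
  forall a, exists l : seq (V * V), a = \sum_(p <- l) m p.1 p.2.

Definition is_mult (V : lmodType CC) (m : V -> V -> V) (T : V -> V) : Prop :=
  is_lin T /\ (forall a b, T (m a b) = m (T a) b) /\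
  (forall a, exists c, forall b, m a (T b) = m c b).

Section Bialgebroid.
Variables (A B : lmodType CC) (mA : A -> A -> A) (mB : B -> B -> B).

Definition spans (P : B -> Prop) (s : B -> A -> A) : Prop :=
  forall a, exists l : seq (B * A), List.Forall (fun p => P p.1) l /\
    a = \sum_(p <- l) s p.1 p.2.

(* generating relations of  _P A (x) A^P  inside the free space on A*A *)
Definition rel2 (P : B -> Prop) (s t : B -> A -> A) (v : fv (A * A)) : Prop :=
  (exists a a' b, v = [:: (1, (a + a', b)); (-1, (a, b)); (-1, (a', b))]) \/
  (exists a b b', v = [:: (1, (a, b + b')); (-1, (a, b)); (-1, (a, b'))]) \/
  (exists (k : CC) a b, v = [:: (1, (k *: a, b)); (-k, (a, b))]) \/
  (exists (k : CC) a b, v = [:: (1, (a, k *: b)); (-k, (a, b))]) \/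
  (exists x a b, P x /\ v = [:: (1, (s x a, b)); (-1, (a, t x b))]).

(* generating relations of  A (x) A (x) A  modulo the span in axiom (v) *)
Definition rel3 (P : B -> Prop) (s t : B -> A -> A) (v : fv (A * A * A)) : Prop :=
  (exists a a' b c, v = [:: (1, (a + a', b, c)); (-1, (a, b, c)); (-1, (a', b, c))]) \/
  (exists a b b' c, v = [:: (1, (a, b + b', c)); (-1, (a, b, c)); (-1, (a, b', c))]) \/
  (exists a b c c', v = [:: (1, (a, b, c + c')); (-1, (a, b, c)); (-1, (a, b, c'))]) \/
  (exists (k : CC) a b c, v = [:: (1, (k *: a, b, c)); (-k, (a, b, c))]) \/
  (exists (k : CC) a b c, v = [:: (1, (a, k *: b, c)); (-k, (a, b, c))]) \/
  (exists (k : CC) a b c, v = [:: (1, (a, b, k *: c)); (-k, (a, b, c))]) \/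
  (exists x a b c, P x /\ v = [:: (1, (s x a, b, c)); (-1, (a, t x b, c))]) \/
  (exists x a b c, P x /\ v = [:: (1, (a, s x b, c)); (-1, (a, b, t x c))]).

Definition rmulL (v : fv (A * A)) (a : A) : fv (A * A) :=
  [seq (p.1, (mA p.2.1 a, p.2.2)) | p <- v].
Definition rmulR (v : fv (A * A)) (b : A) : fv (A * A) :=
  [seq (p.1, (p.2.1, mA p.2.2 b)) | p <- v].
Definition lmul2 (f g : A -> A) (v : fv (A * A)) : fv (A * A) :=
  [seq (p.1, (f p.2.1, g p.2.2)) | p <- v].

(* A comultiplication Delta is encoded by D : A -> A -> A -> fv (A*A), where
   D c a b is a representative of Delta(c)(a (x) b); Delta(c) is the linear
   extension to the free space, applied to representatives: *)
Definition Dapp (D : A -> A -> A -> fv (A * A)) (c : A) (v : fv (A * A)) :=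
  flatten [seq fscale p.1 (D c p.2.1 p.2.2) | p <- v].

Definition tensL (F : A -> fv (A * A)) (v : fv (A * A)) : fv (A * A * A) :=
  flatten [seq [seq (p.1 * w.1, (w.2.1, w.2.2, p.2.2)) | w <- F p.2.1] | p <- v].
Definition tensR (G : A -> fv (A * A)) (v : fv (A * A)) : fv (A * A * A) :=
  flatten [seq [seq (p.1 * w.1, (p.2.1, w.2.1, w.2.2)) | w <- G p.2.2] | p <- v].

(* Left multiplier bialgebroid (A, P, s|P, t|P, Delta), where the base algebra
   is the subalgebra {x in B | P x} of the algebra (B, mB); with P = True this
   is the definition for the base algebra B itself. *)
Definition is_LMB (P : B -> Prop) (s t : B -> A -> A)
    (D : A -> A -> A -> fv (A * A)) : Prop :=
  let R2 := rel2 P s t in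
  (is_alg mA /\ is_alg mB /\ is_subalg mB P /\ nondeg_r mA /\ idempotent mA) /\
  ((forall x, P x -> is_mult mA (s x)) /\ (forall x, P x -> is_mult mA (t x)) /\
      (forall x y, P x -> P y ->
         [/\ s (x + y) =1 (fun a => s x a + s y a),
             (forall k : CC, s (k *: x) =1 (fun a => k *: s x a)) &
             s (mB x y) =1 (fun a => s x (s y a))]) /\
      (forall x y, P x -> P y ->
         [/\ t (x + y) =1 (fun a => t x a + t y a),
             (forall k : CC, t (k *: x) =1 (fun a => k *: t x a)) &
             t (mB x y) =1 (fun a => t y (t x a))]) /\
      (forall x y, P x -> P y -> forall a, s x (t y a) = t y (s x a))) /\
  ((forall x y, P x -> P y -> s x =1 s y -> x = y) /\
      (forall x y, P x -> P y -> t x =1 t y -> x = y) /\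
      spans P s /\ spans P t /\
      (forall v, (forall a, inspan R2 (rmulL v a)) -> inspan R2 v) /\
      (forall v, (forall b, inspan R2 (rmulR v b)) -> inspan R2 v)) /\
  (* (iii) Delta(c) in A barx_P A, and Delta an algebra homomorphism *)
  ((forall c v, inspan R2 v -> inspan R2 (Dapp D c v)) /\
      (forall c a, exists u, forall b, fequiv R2 (D c a b) (rmulR u b)) /\
      (forall c b, exists w, forall a, fequiv R2 (D c a b) (rmulL w a)) /\
      (forall c c' a b, fequiv R2 (D (c + c') a b) (D c a b ++ D c' a b)) /\
      (forall (k : CC) c a b, fequiv R2 (D (k *: c) a b) (fscale k (D c a b))) /\
      (forall c c' a b, fequiv R2 (D (mA c c') a b) (Dapp D c (D c' a b)))) /\
  (forall x y x' y', P x -> P y -> P x' -> P y' -> forall a c,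
     (forall b, mA c b = s x (t y (mA a (s x' (t y' b))))) ->
     forall p q, fequiv R2 (D c p q) (lmul2 (t y) (s x) (D a (t y' p) (s x' q)))) /\
  (forall a b c (L1 L2 : fv (A * A)),
     (forall a', fequiv R2 (D b a' c) (rmulL L1 a')) ->   (* L1 = Delta(b)(1 (x) c) *)
     (forall b', fequiv R2 (D b a b') (rmulR L2 b')) ->   (* L2 = Delta(b)(a (x) 1) *)
     forall F G : A -> fv (A * A),
     (forall p b', fequiv R2 (D p a b') (rmulR (F p) b')) ->  (* F p = Delta(p)(a (x) 1) *)
     (forall v a', fequiv R2 (D v a' c) (rmulL (G v) a')) ->  (* G v = Delta(v)(1 (x) c) *)
     fequiv (rel3 P s t) (tensL F L1) (tensR G L2)).

Definition is_lcounit (P : B -> Prop) (s t : B -> A -> A)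
    (D : A -> A -> A -> fv (A * A)) (eps : A -> B) : Prop :=
  let R2 := rel2 P s t in
  (forall a, P (eps a)) /\ is_lin eps /\
      (forall x a, P x -> eps (s x a) = mB x (eps a)) /\
      (forall y a, P y -> eps (t y a) = mB (eps a) y) /\
      (* T_rho(a (x) b) = Delta(a)(1 (x) b) = L *)
      (forall a b L, (forall a', fequiv R2 (D a a' b) (rmulL L a')) ->
          \sum_(p <- L) p.1 *: t (eps p.2.1) p.2.2 = mA a b) /\
      (* T_lambda(a (x) b) = Delta(b)(a (x) 1) = L *)
      (forall a b L, (forall b', fequiv R2 (D b a b') (rmulR L b')) ->
          \sum_(p <- L) p.1 *: s (eps p.2.2) p.2.1 = mA b a).

End Bialgebroid.

(* Main.v *)
Require Import Defs.
From mathcomp Require Import all_boot all_algebra.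
From mathcomp Require Import boolp Rstruct.
From mathcomp.real_closed Require Import complex.
From mathcomp Require Import ring.
Set Implicit Arguments. Unset Strict Implicit.
Import GRing.Theory.
Local Open Scope ring_scope.

Definition ind (X : Type) (x z : X) : CC := if `[< x = z >] then 1 else 0.

Definition bind (X Y : Type) (F : X -> fv Y) (v : fv X) : fv Y :=
  flatten [seq fscale p.1 (F p.2) | p <- v].

Section Coef.
Variable X : Type.
Implicit Types (v w u : fv X).

Lemma fc_nil z : coef ([::] : fv X) z = 0.
Proof. by rewrite /coef big_nil. Qed.

Lemma fc_cons k x v z : coef ((k,x)::v) z = k * ind x z + coef v z.
Proof. by rewrite /coef big_cons /ind /=; case: ifP => _; rewrite ?mulr1 ?mulr0. Qed.

Lemma fc_cat v w z : coef (v ++ w) z = coef v z + coef w z.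
Proof. by rewrite /coef big_cat. Qed.

Lemma fc_fscale k v z : coef (fscale k v) z = k * coef v z.
Proof.
elim: v => [|[k' x] v IH]; first by rewrite fc_nil mulr0.
rewrite /fscale /= -/(fscale k v) !fc_cons IH; ring.
Qed.

Lemma fcE v z : coef v z = \sum_(p <- v) p.1 * ind p.2 z.
Proof.
elim: v => [|[k x] v IH]; first by rewrite fc_nil big_nil.
by rewrite fc_cons big_cons IH.
Qed.

Lemma sum0 (g : X -> CC) : forall u, (forall y, coef u y = 0) ->
  \sum_(p <- u) p.1 * g p.2 = 0.
Proof.
move=> u; have [n] := ubnP (size u); elim: n u => // n IH [|[k x] u] Hs H0.
  by rewrite big_nil.
pose P := fun p : CC * X => `[< p.2 = x >].
rewrite (bigID P) /=.
have -> : \sum_(p <- (k,x)::u | P p) p.1 * g p.2 = (\sum_(p <- (k,x)::u | P p) p.1) * g x.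
  by rewrite mulr_suml; apply: eq_bigr => p /asboolP ->.
have -> : \sum_(p <- (k,x)::u | P p) p.1 = coef ((k,x)::u) x.
  by rewrite /coef big_mkcond.
rewrite H0 mul0r add0r -(big_filter _ (fun p => ~~ P p)); apply: IH.
  rewrite /= /P /=.
  have -> : `[< x = x >] = true by apply/asboolP.
  rewrite /= size_filter; apply: leq_ltn_trans (count_size _ _) _; exact: Hs.
move=> y; rewrite /coef big_filter.
case: (pselect (y = x)) => [->|nyx].
  by rewrite big1 // => p /negP nP; case: asboolP => // e; exfalso; apply: nP; apply/asboolP.
have E := H0 y; rewrite /coef (bigID P) /= in E.
rewrite big1 ?add0r // in E => p /asboolP ->.
by case: asboolP => // e; exfalso; apply: nyx.
Qed.

Lemma sum_fscale k w (g : X -> CC) :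
  \sum_(p <- fscale k w) p.1 * g p.2 = k * \sum_(p <- w) p.1 * g p.2.
Proof.
elim: w => [|[k' x] w IH]; first by rewrite !big_nil mulr0.
by rewrite /fscale /= -/(fscale k w) !big_cons IH /=; ring.
Qed.

Lemma sum_coef_eq v w (g : X -> CC) : (forall y, coef v y = coef w y) ->
  \sum_(p <- v) p.1 * g p.2 = \sum_(p <- w) p.1 * g p.2.
Proof.
move=> H.
have := sum0 g (u := v ++ fscale (-1) w).
rewrite big_cat sum_fscale => E. apply/eqP; rewrite -subr_eq0; apply/eqP.
rewrite -[RHS]E; first by rewrite mulN1r.
by move=> y; rewrite fc_cat fc_fscale H; ring.
Qed.
End Coef.

Lemma fc_bind (X Y : Type) (F : X -> fv Y) v z :
  coef (bind F v) z = \sum_(p <- v) p.1 * coef (F p.2) z.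
Proof.
elim: v => [|[k x] v IH]; first by rewrite big_nil /bind /= fc_nil.
by rewrite /bind /= -/(bind F v) fc_cat fc_fscale IH big_cons.
Qed.

Section Span.
Variable X : Type.
Variable Rel : fv X -> Prop.
Implicit Types (v w u : fv X).

Lemma Forall_cat T (P : T -> Prop) (s1 s2 : seq T) :
  List.Forall P s1 -> List.Forall P s2 -> List.Forall P (s1 ++ s2).
Proof. by elim: s1 => //= a s1 IH H1 H2; inversion H1; constructor; auto. Qed.

Lemma Forall_map T U (f : T -> U) (P : U -> Prop) (s : seq T) :
  (forall x, P (f x)) -> List.Forall P (map f s).
Proof. by move=> H; elim: s => //= a s IH; constructor. Qed.

Lemma Forall_mapP T U (f : T -> U) (P : U -> Prop) (Q : T -> Prop) (s : seq T) :
  (forall x, Q x -> P (f x)) -> List.Forall Q s -> List.Forall P (map f s).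
Proof. by move=> H; elim: s => //= a s IH H1; inversion H1; constructor; auto. Qed.

Lemma inspan_comb (rs : seq (CC * fv X)) v :
  List.Forall (fun r => inspan Rel r.2) rs ->
  (forall z, coef v z = \sum_(r <- rs) r.1 * coef r.2 z) -> inspan Rel v.
Proof.
move=> Hrs Hv.
suff [qs [Hq Eq]] : exists qs : seq (CC * fv X), List.Forall (fun r => Rel r.2) qs /\
  forall z, \sum_(r <- rs) r.1 * coef r.2 z = \sum_(q <- qs) q.1 * coef q.2 z.
  by exists qs; split => // z; rewrite Hv Eq.
elim: rs Hrs {Hv} => [|[k u] rs IH] H.
  by exists [::]; split => // z; rewrite !big_nil.
inversion H as [|? ? [qs1 [H1 E1]] H2]; subst.
have [qs2 [H3 E2]] := IH H2.
exists ([seq (k * q.1, q.2) | q <- qs1] ++ qs2); split.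
  apply: Forall_cat => //; exact: (Forall_mapP (Q := fun r => Rel r.2)).
move=> z; rewrite big_cons big_cat big_map /= E1 E2 mulr_sumr.
by congr (_ + _); apply: eq_bigr => q _; rewrite mulrA.
Qed.

Lemma inspan_gen r : Rel r -> inspan Rel r.
Proof.
by move=> H; exists [:: (1, r)]; split; [constructor|move=> z; rewrite big_cons big_nil /= mul1r addr0].
Qed.

Lemma inspan_coef v w : inspan Rel w -> (forall z, coef v z = coef w z) -> inspan Rel v.
Proof.
move=> H E; apply: (inspan_comb (rs := [:: (1, w)])); first by constructor.
by move=> z; rewrite big_cons big_nil /= mul1r addr0.
Qed.

Lemma inspan_gen_coef r v : Rel r -> (forall z, coef v z = coef r z) -> inspan Rel v.
Proof. move=> /inspan_gen; exact: inspan_coef. Qed.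

Lemma inspan2 k1 u1 k2 u2 v : inspan Rel u1 -> inspan Rel u2 ->
  (forall z, coef v z = k1 * coef u1 z + k2 * coef u2 z) -> inspan Rel v.
Proof.
move=> H1 H2 E; apply: (inspan_comb (rs := [:: (k1, u1); (k2, u2)])).
  by repeat constructor.
by move=> z; rewrite !big_cons big_nil /= addr0 E.
Qed.

Lemma inspan0 v : (forall z, coef v z = 0) -> inspan Rel v.
Proof. by move=> E; exists [::]; split => // z; rewrite big_nil E. Qed.

Lemma fequiv_refl v : fequiv Rel v v.
Proof. by rewrite /fequiv; apply: inspan0 => z; rewrite fc_cat fc_fscale; ring. Qed.

Lemma fequiv_coef v w : (forall z, coef v z = coef w z) -> fequiv Rel v w.
Proof. by move=> E; rewrite /fequiv; apply: inspan0 => z; rewrite fc_cat fc_fscale E; ring. Qed.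

Lemma fequiv_sym v w : fequiv Rel v w -> fequiv Rel w v.
Proof.
move=> H; apply: (inspan2 (k1 := -1) (k2 := 0) H H) => z.
rewrite !fc_cat !fc_fscale; ring.
Qed.

Lemma fequiv_trans v w u : fequiv Rel v w -> fequiv Rel w u -> fequiv Rel v u.
Proof.
move=> H1 H2; apply: (inspan2 (k1 := 1) (k2 := 1) H1 H2) => z.
rewrite !fc_cat !fc_fscale; ring.
Qed.

Lemma fequiv_cat v1 w1 v2 w2 : fequiv Rel v1 w1 -> fequiv Rel v2 w2 ->
  fequiv Rel (v1 ++ v2) (w1 ++ w2).
Proof.
move=> H1 H2; apply: (inspan2 (k1 := 1) (k2 := 1) H1 H2) => z.
rewrite !fc_cat !fc_fscale ?fc_cat; ring.
Qed.

Lemma fequiv_scale k v w : fequiv Rel v w -> fequiv Rel (fscale k v) (fscale k w).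
Proof.
move=> H1; apply: (inspan2 (k1 := k) (k2 := 0) H1 H1) => z.
rewrite !fc_cat !fc_fscale ?fc_cat ?fc_fscale; ring.
Qed.

Lemma fequiv_inspan v : fequiv Rel v [::] <-> inspan Rel v.
Proof.
split => H; apply: (inspan_coef H) => z; rewrite fc_cat fc_fscale fc_nil; ring.
Qed.

Lemma inspan_fequiv v w : fequiv Rel v w -> inspan Rel w -> inspan Rel v.
Proof.
move=> H1 H2; apply: (inspan2 (k1 := 1) (k2 := 1) H1 H2) => z.
rewrite !fc_cat !fc_fscale; ring.
Qed.

End Span.

Lemma inspan_mono (X : Type) (Rel Rel' : fv X -> Prop) v :
  (forall r, Rel r -> inspan Rel' r) -> inspan Rel v -> inspan Rel' v.
Proof.
move=> H [rs [Hrs E]]; apply: (@inspan_comb X Rel' rs) => //.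
by apply: List.Forall_impl Hrs => r; apply: H.
Qed.


Lemma bind_cons (X Y : Type) (F : X -> fv Y) k x v :
  bind F ((k,x)::v) = fscale k (F x) ++ bind F v.
Proof. by []. Qed.

Lemma inspan_bind (X Y : Type) (Rel : fv X -> Prop) (Rel' : fv Y -> Prop)
  (F : X -> fv Y) v :
  (forall r, Rel r -> inspan Rel' (bind F r)) -> inspan Rel v -> inspan Rel' (bind F v).
Proof.
move=> H [rs [Hrs E]].
apply: (inspan_comb (rs := [seq (r.1, bind F r.2) | r <- rs])).
  by apply: (Forall_mapP (Q := fun r => Rel r.2)) => // r; apply: H.
move=> z; rewrite fc_bind big_map /=.
have E' : forall y, coef v y = coef (bind id rs) y.
  by move=> y; rewrite E fc_bind.
rewrite (sum_coef_eq (fun x => coef (F x) z) E').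
elim: rs {Hrs E E'} => [|[k u] rs IH]; first by rewrite /bind !big_nil.
by rewrite bind_cons big_cat (sum_fscale _ _ (fun x => coef (F x) z)) IH big_cons /= fc_bind.
Qed.

Lemma bind_cat (X Y : Type) (F : X -> fv Y) v w : bind F (v ++ w) = bind F v ++ bind F w.
Proof. by rewrite /bind map_cat flatten_cat. Qed.

Lemma fequiv_bind (X Y : Type) (Rel : fv X -> Prop) (Rel' : fv Y -> Prop)
  (F : X -> fv Y) v w :
  (forall r, Rel r -> inspan Rel' (bind F r)) -> fequiv Rel v w ->
  fequiv Rel' (bind F v) (bind F w).
Proof.
move=> H E; have := inspan_bind H E; rewrite bind_cat => H2.
apply: (inspan_coef H2) => z; rewrite !fc_cat !fc_bind !fc_fscale fc_bind.
by rewrite (sum_fscale _ _ (fun x => coef (F x) z)).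
Qed.

Lemma fequiv_bindF (X Y : Type) (Rel' : fv Y -> Prop) (F G : X -> fv Y) v :
  (forall x, fequiv Rel' (F x) (G x)) -> fequiv Rel' (bind F v) (bind G v).
Proof.
move=> H.
apply: (inspan_comb (rs := [seq (p.1, F p.2 ++ fscale (-1) (G p.2)) | p <- v])).
  by apply: Forall_map => x; apply: H.
move=> z; rewrite fc_cat fc_fscale !fc_bind big_map /=.
rewrite mulr_sumr -big_split /=; apply: eq_bigr => p _.
by rewrite fc_cat fc_fscale; ring.
Qed.


Lemma lin0 (V W : lmodType CC) (f : V -> W) : is_lin f -> f 0 = 0.
Proof. by move=> [_ H]; rewrite -(scale0r (0 : V)) H scale0r. Qed.

Lemma main2 (A B : lmodType CC) (mB : B -> B -> B) (s t : B -> A -> A) (B0 : B -> Prop) :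
  (forall x, is_lin (s x)) ->
  (forall x y a, s (mB x y) a = s x (s y a)) ->
  (forall x y a, t (mB x y) a = t y (t x a)) ->
  (forall x y, B0 y -> B0 (mB x y)) ->
  spans B0 s ->
  forall x a b, inspan (rel2 B0 s t) [:: (1, (s x a, b)); (-1, (a, t x b))].
Proof.
move=> slin smul tmul idl sp x a b.
have [l [Hl ->]] := sp a.
elim: l Hl => [|[y c] l IH] Hl.
  rewrite big_nil (lin0 (slin x)).
  have Z : forall b', inspan (rel2 B0 s t) [:: (1, (0, b'))].
    move=> b'; apply: (inspan_gen_coef (r := [:: (1, (0 *: (0:A), b')); (-0, (0, b'))])).
      by right; right; left; exists 0, 0, b'.
    by move=> z; rewrite !fc_cons fc_nil scale0r; ring.
  by apply: (inspan2 (k1:=1) (k2:= -1) (Z b) (Z (t x b))) => z; rewrite !fc_cons !fc_nil; ring.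
inversion Hl as [|? ? Hy Hl']; subst; simpl in Hy.
have IH' := IH Hl'.
rewrite big_cons /=. set S := \sum_(p <- l) s p.1 p.2.
rewrite (slin x).1 -smul.
apply: (inspan_comb (rs := [:: (1, [:: (1,(s (mB x y) c + s x S, b)); (-1,(s (mB x y) c, b)); (-1,(s x S, b))]);
   (-1, [:: (1,(s y c + S, t x b)); (-1,(s y c, t x b)); (-1,(S, t x b))]);
   (1, [:: (1, (s x S, b)); (-1, (S, t x b))]);
   (1, [:: (1,(s (mB x y) c, b)); (-1,(c, t (mB x y) b))]);
   (-1, [:: (1,(s y c, t x b)); (-1, (c, t y (t x b)))])])).
  apply: List.Forall_cons.
    by apply: inspan_gen; left; exists (s (mB x y) c), (s x S), b.
  apply: List.Forall_cons.
    by apply: inspan_gen; left; exists (s y c), S, (t x b).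
  apply: List.Forall_cons; first exact: IH'.
  apply: List.Forall_cons.
    by apply: inspan_gen; right; right; right; right; exists (mB x y), c, b; split => //; apply: idl.
  apply: List.Forall_cons; last exact: List.Forall_nil.
  by apply: inspan_gen; right; right; right; right; exists y, c, (t x b).
move=> z; rewrite !big_cons big_nil /= !fc_cons !fc_nil tmul; ring.
Qed.

Lemma rel2_mono (A B : lmodType CC) (s t : B -> A -> A) (P Q : B -> Prop) r :
  (forall x, P x -> Q x) -> rel2 P s t r -> rel2 Q s t r.
Proof.
move=> H [h|[h|[h|[h|[x [a [b [Px ->]]]]]]]];
  [left|right;left|right;right;left|right;right;right;left|right;right;right;right] => //.
by exists x, a, b; split => //; apply: H.
Qed.

Lemma rel3_mono (A B : lmodType CC) (s t : B -> A -> A) (P Q : B -> Prop) r :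
  (forall x, P x -> Q x) -> rel3 P s t r -> rel3 Q s t r.
Proof.
move=> H [h|[h|[h|[h|[h|[h|[[x [a [b [c [Px ->]]]]]|[x [a [b [c [Px ->]]]]]]]]]]]].
- by left.
- by right; left.
- by right; right; left.
- by right; right; right; left.
- by right; right; right; right; left.
- by right; right; right; right; right; left.
- by right; right; right; right; right; right; left; exists x, a, b, c; split => //; apply: H.
- by right; right; right; right; right; right; right; exists x, a, b, c; split => //; apply: H.
Qed.

Section Eqv.
Variables (A B : lmodType CC) (mB : B -> B -> B) (s t : B -> A -> A) (B0 : B -> Prop).
Variables (slin : forall x, is_lin (s x))
  (smul : forall x y a, s (mB x y) a = s x (s y a))
  (tmul : forall x y a, t (mB x y) a = t y (t x a))
  (idl : forall x y, B0 y -> B0 (mB x y))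
  (sp : spans B0 s).

Lemma eqv2 u : inspan (rel2 (fun _ => True) s t) u <-> inspan (rel2 B0 s t) u.
Proof.
split; apply: inspan_mono => r.
  move=> [h|[h|[h|[h|[x [a [b [_ ->]]]]]]]].
  - by apply: inspan_gen; left.
  - by apply: inspan_gen; right; left.
  - by apply: inspan_gen; right; right; left.
  - by apply: inspan_gen; right; right; right; left.
  - exact: (main2 slin smul tmul idl sp).
by move=> h; apply: inspan_gen; apply: rel2_mono h.
Qed.

Lemma main3a x a b c : inspan (rel3 B0 s t) [:: (1, (s x a, b, c)); (-1, (a, t x b, c))].
Proof.
have H := main2 slin smul tmul idl sp x a b.
pose F : A * A -> fv (A * A * A) := fun p => [:: (1, (p.1, p.2, c))].
have HB : forall r, rel2 B0 s t r -> inspan (rel3 B0 s t) (bind F r).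
  move=> r [[a1 [a2 [b1 ->]]]|[[a1 [b1 [b2 ->]]]|[[k [a1 [b1 ->]]]|[[k [a1 [b1 ->]]]|[y [a1 [b1 [Py ->]]]]]]]].
  - apply: inspan_gen_coef; first by left; exists a1, a2, b1, c.
    by move=> z; rewrite /bind /= !fc_cons !fc_nil; ring.
  - apply: inspan_gen_coef; first by right; left; exists a1, b1, b2, c.
    by move=> z; rewrite /bind /= !fc_cons !fc_nil; ring.
  - apply: inspan_gen_coef; first by right; right; right; left; exists k, a1, b1, c.
    by move=> z; rewrite /bind /= !fc_cons !fc_nil; ring.
  - apply: inspan_gen_coef; first by right; right; right; right; left; exists k, a1, b1, c.
    by move=> z; rewrite /bind /= !fc_cons !fc_nil; ring.
  - apply: inspan_gen_coef; first by right; right; right; right; right; right; left; exists y, a1, b1, c.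
    by move=> z; rewrite /bind /= !fc_cons !fc_nil; ring.
apply: (inspan_coef (inspan_bind HB H)).
by move=> z; rewrite /bind /= !fc_cons !fc_nil; ring.
Qed.

Lemma main3b x a b c : inspan (rel3 B0 s t) [:: (1, (a, s x b, c)); (-1, (a, b, t x c))].
Proof.
have H := main2 slin smul tmul idl sp x b c.
pose F : A * A -> fv (A * A * A) := fun p => [:: (1, (a, p.1, p.2))].
have HB : forall r, rel2 B0 s t r -> inspan (rel3 B0 s t) (bind F r).
  move=> r [[a1 [a2 [b1 ->]]]|[[a1 [b1 [b2 ->]]]|[[k [a1 [b1 ->]]]|[[k [a1 [b1 ->]]]|[y [a1 [b1 [Py ->]]]]]]]].
  - apply: inspan_gen_coef; first by right; left; exists a, a1, a2, b1.
    by move=> z; rewrite /bind /= !fc_cons !fc_nil; ring.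
  - apply: inspan_gen_coef; first by right; right; left; exists a, a1, b1, b2.
    by move=> z; rewrite /bind /= !fc_cons !fc_nil; ring.
  - apply: inspan_gen_coef; first by right; right; right; right; left; exists k, a, a1, b1.
    by move=> z; rewrite /bind /= !fc_cons !fc_nil; ring.
  - apply: inspan_gen_coef; first by right; right; right; right; right; left; exists k, a, a1, b1.
    by move=> z; rewrite /bind /= !fc_cons !fc_nil; ring.
  - apply: inspan_gen_coef; first by right; right; right; right; right; right; right; exists y, a, a1, b1.
    by move=> z; rewrite /bind /= !fc_cons !fc_nil; ring.
apply: (inspan_coef (inspan_bind HB H)).
by move=> z; rewrite /bind /= !fc_cons !fc_nil; ring.
Qed.

Lemma eqv3 u : inspan (rel3 (fun _ => True) s t) u <-> inspan (rel3 B0 s t) u.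
Proof.
split; apply: inspan_mono => r; last first.
  by move=> h; apply: inspan_gen; apply: rel3_mono h.
move=> [h|[h|[h|[h|[h|[h|[[x [a [b [c [_ ->]]]]]|[x [a [b [c [_ ->]]]]]]]]]]]].
- by apply: inspan_gen; left.
- by apply: inspan_gen; right; left.
- by apply: inspan_gen; right; right; left.
- by apply: inspan_gen; right; right; right; left.
- by apply: inspan_gen; right; right; right; right; left.
- by apply: inspan_gen; right; right; right; right; right; left.
- exact: main3a.
- exact: main3b.
Qed.
End Eqv.


Lemma fequiv_coefeq (X : Type) (Rel : fv X -> Prop) v1 w1 v2 w2 :
  (forall z, coef v1 z = coef v2 z) -> (forall z, coef w1 z = coef w2 z) ->
  fequiv Rel v2 w2 -> fequiv Rel v1 w1.
Proof.
move=> E1 E2 H; apply: (inspan_coef H) => z.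
by rewrite !fc_cat !fc_fscale E1 E2.
Qed.

Lemma lmul2_bind (A : lmodType CC) (f g : A -> A) v z :
  coef (lmul2 f g v) z = coef (bind (fun q : A * A => [:: (1, (f q.1, g q.2))]) v) z.
Proof.
rewrite fc_bind /lmul2 !fcE big_map; apply: eq_bigr => p _ /=.
by rewrite fc_cons fc_nil; ring.
Qed.

Unset Implicit Arguments.
Set Strict Implicit.

Theorem lemma3p7 (A B : lmodType CC) (mA : A -> A -> A) (mB : B -> B -> B)
    (s t : B -> A -> A) (D : A -> A -> A -> fv (A * A)) (B0 : B -> Prop) :
  is_LMB mA mB (fun _ => True) s t D ->
  is_ideal mB B0 -> spans B0 s -> spans B0 t ->
  (* the natural map  _B0 A (x) A^B0 -> _B A (x) A^B  is an isomorphism *)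
  (forall v w : fv (A * A),
     fequiv (rel2 (fun _ => True) s t) v w <-> fequiv (rel2 B0 s t) v w) /\
  (* D0 represents Delta_0 = (iso) o Delta *)
  (forall D0 : A -> A -> A -> fv (A * A),
     (forall c a b, fequiv (rel2 (fun _ => True) s t) (D0 c a b) (D c a b)) ->
     is_LMB mA mB B0 s t D0 /\
     (forall eps : A -> B, is_lcounit mA mB (fun _ => True) s t D eps ->
        is_lcounit mA mB B0 s t D0 eps)).
Proof.
move=> HL Hideal Hsp Htp.
rewrite /is_LMB in HL; cbv zeta in HL.
move: HL => [[HalgA [HalgB [Hsub [Hnd Hid]]]] [[Hsm [Htm [Hs [Ht Hcomm]]]]
   [[Hsinj [Htinj [Hsp' [Htp' [HndL HndR]]]]] [[D1 [D2 [D3 [D4 [D5 D6]]]]] [Hiv Hv]]]]].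
have slin : forall x, is_lin (s x) by move=> x; exact: (Hsm x I).1.
have smul : forall x y a, s (mB x y) a = s x (s y a).
  by move=> x y a; have [_ _ ->] := Hs x y I I.
have tmul : forall x y a, t (mB x y) a = t y (t x a).
  by move=> x y a; have [_ _ ->] := Ht x y I I.
move: (Hideal) => [P0 [Padd [Pscal Pmul]]].
have idl : forall x y, B0 y -> B0 (mB x y) by move=> x y Py; exact: (Pmul x y Py).1.
set R := rel2 (fun _ => True) s t.
have EI2 : inspan (rel2 B0 s t) = inspan R.
  apply: funext => u; apply: propext; exact: iff_sym (eqv2 slin smul tmul idl Hsp u).
have EF2 : fequiv (rel2 B0 s t) = fequiv R.
  by apply: funext => v; apply: funext => w; rewrite /fequiv EI2.
have EF3 : fequiv (rel3 B0 s t) = fequiv (rel3 (fun _ => True) s t).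
  apply: funext => v; apply: funext => w; apply: propext; rewrite /fequiv.
  exact: iff_sym (eqv3 slin smul tmul idl Hsp _).
split; first by move=> v w; rewrite EF2.
move=> D0 HD0.
have HD0' : forall c a b, fequiv R (D c a b) (D0 c a b) by move=> *; apply: fequiv_sym.
split.
  rewrite /is_LMB; cbv zeta; rewrite EF2 EI2 EF3.
  split.
    split => //; split => //; split => //.
    split => //; split => //; split => // x y _ Py; exact: (Pmul x y Py).1.
  split.
    by split; [move=> x _; exact: Hsm|split; [move=> x _; exact: Htm|split;
      [move=> x y _ _; exact: Hs|split; [move=> x y _ _; exact: Ht|move=> x y _ _; exact: Hcomm]]]].
  split.
    by split; [move=> x y _ _; exact: Hsinj|split; [move=> x y _ _; exact: Htinj|]].
  split.
    split.
      move=> c v Hv0.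
      have E : fequiv R (Dapp D0 c v) (Dapp D c v).
        exact: (fequiv_bindF (F := fun q => D0 c q.1 q.2) (G := fun q => D c q.1 q.2)).
      exact: (inspan_fequiv E (D1 c v Hv0)).
    split.
      move=> c a; have [u Hu] := D2 c a; exists u => b.
      exact: fequiv_trans (HD0 c a b) (Hu b).
    split.
      move=> c b; have [u Hu] := D3 c b; exists u => a.
      exact: fequiv_trans (HD0 c a b) (Hu a).
    split.
      move=> c c' a b; apply: fequiv_trans (HD0 _ _ _) _.
      apply: fequiv_trans (D4 c c' a b) _; exact: fequiv_cat.
    split.
      move=> k c a b; apply: fequiv_trans (HD0 _ _ _) _.
      apply: fequiv_trans (D5 k c a b) _; exact: fequiv_scale.
    move=> c c' a b; apply: fequiv_trans (HD0 _ _ _) _.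
    apply: fequiv_trans (D6 c c' a b) _.
    apply: fequiv_trans (fequiv_bindF (F := fun q => D c q.1 q.2) (G := fun q => D0 c q.1 q.2) _ _).
      apply: (fequiv_bind (Rel := R) (F := fun q => D c q.1 q.2)) => //.
      by move=> r Hr; apply: D1; apply: inspan_gen.
    by move=> q; apply: HD0'.
  split.
    move=> x y x' y' _ _ _ _ a c Hc p q.
    apply: fequiv_trans (HD0 _ _ _) _.
    apply: fequiv_trans (Hiv x y x' y' I I I I a c Hc p q) _.
    pose G : A * A -> fv (A * A) := fun q => [:: (1, (t y q.1, s x q.2))].
    apply: (fequiv_coefeq (lmul2_bind _ _ _) (lmul2_bind _ _ _)).
    apply: (fequiv_bind (Rel := R) (F := G)) => //.
    have tl := (Htm y I).1; have sl := (Hsm x I).1.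
    move=> r [[a1 [a2 [b1 ->]]]|[[a1 [b1 [b2 ->]]]|[[k [a1 [b1 ->]]]|[[k [a1 [b1 ->]]]|[z [a1 [b1 [_ ->]]]]]]]].
    - apply: inspan_gen_coef; first by left; exists (t y a1), (t y a2), (s x b1).
      by move=> w; rewrite /bind /= !fc_cons !fc_nil tl.1; ring.
    - apply: inspan_gen_coef; first by right; left; exists (t y a1), (s x b1), (s x b2).
      by move=> w; rewrite /bind /= !fc_cons !fc_nil sl.1; ring.
    - apply: inspan_gen_coef; first by right; right; left; exists k, (t y a1), (s x b1).
      by move=> w; rewrite /bind /= !fc_cons !fc_nil tl.2; ring.
    - apply: inspan_gen_coef; first by right; right; right; left; exists k, (t y a1), (s x b1).
      by move=> w; rewrite /bind /= !fc_cons !fc_nil sl.2; ring.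
    - apply: inspan_gen_coef; first by right; right; right; right; exists z, (t y a1), (s x b1).
      move=> w; rewrite /bind /= !fc_cons !fc_nil -(Hcomm z y I I a1) (Hcomm x z I I b1); ring.
  move=> a b c L1 L2 H1 H2 F G HF HG.
  apply: (Hv a b c L1 L2).
  - by move=> a'; apply: fequiv_trans (HD0' _ _ _) (H1 a').
  - by move=> b'; apply: fequiv_trans (HD0' _ _ _) (H2 b').
  - by move=> p b'; apply: fequiv_trans (HD0' _ _ _) (HF p b').
  - by move=> v a'; apply: fequiv_trans (HD0' _ _ _) (HG v a').
move=> eps; rewrite /is_lcounit; cbv zeta; rewrite EF2.
move=> [_ [He2 [He3 [He4 [He5 He6]]]]].
split.
  move=> a; have [l [Hl ->]] := Hsp a.
  elim: l Hl => [|[y c] l IH] Hl; first by rewrite big_nil !lin0.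
  inversion Hl as [|? ? Hy Hl']; subst; simpl in Hy.
  rewrite big_cons He2.1; apply: Padd; last exact: IH.
  by rewrite He3 //; exact: (Pmul _ _ Hy).2.
split => //.
split; first by move=> x a _; apply: He3.
split; first by move=> x a _; apply: He4.
split.
  move=> a b L H; apply: He5 => a'; exact: fequiv_trans (HD0' _ _ _) (H a').
move=> a b L H; apply: He6 => b'; exact: fequiv_trans (HD0' _ _ _) (H b').
Qed.
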